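(* Let $(X,d)$ be a finite metric space and $m\ge 0$ an integer. Let $G_0,G_1,\dots,G_m$ be graphs with vertex set $X$, where $G_0$ is the complete graph on $X$ and, for each $0\le i<m$, $G_{i+1}$ is obtained from $G_i$ through a $d$-erasure. Then $G_m$ contains a minimum spanning tree of $(X,d)$.
   Context: All graphs are finite, undirected, simple; edges $xy$ are weighted by $d(xy)=d(x,y)$. A minimum spanning tree of $(X,d)$ is a spanning tree of the complete graph on $X$ minimizing the sum of the weights of its edges. A facet edge of $G$ is an edge $xy$ such that $\{x,y\}$ is a maximal clique of $G$. An edge of $G$ is exposed if it is contained in a unique maximal clique of $G$ and it is not a facet edge. For graphs $G,H$ on vertex set $X$, $H$ is obtained from $G$ through a $d$-erasure if $H=G-e$ for an exposed edge $e$ of $G$ such that $d(e)\ge d(e')$ for every exposed edge $e'$ of $G$. *)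

(* Defs.v *)
From mathcomp Require Import all_boot all_order all_algebra.
Set Implicit Arguments. Unset Strict Implicit. Unset Printing Implicit Defensive.
Import Order.TTheory GRing.Theory Num.Theory.
Local Open Scope ring_scope.

Section Defs.
Variables (R : realFieldType) (X : finType).

Definition metric (d : X -> X -> R) : Prop :=
  [/\ (forall x y, 0 <= d x y),
      (forall x y, d x y = 0 <-> x = y),
      (forall x y, d x y = d y x) &
      (forall x y z, d x z <= d x y + d y z)].

(* A simple graph on vertex set X is given by its edge set: a set of
   2-element subsets of X. *)
Definition graph := {set {set X}}.

Definition is_simple_graph (G : graph) : Prop :=
  forall e, e \in G -> #|e| = 2%N.

Definition complete_graph : graph := [set e : {set X} | #|e| == 2%N].

Definition adj (G : graph) : rel X := fun x y => [set x; y] \in G.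

Definition edge_w (d : X -> X -> R) (e : {set X}) : R :=
  match [pick x in e] with
  | Some x => match [pick y in e :\ x] with
              | Some y => d x y
              | None => 0
              end
  | None => 0
  end.

Definition weight (d : X -> X -> R) (T : graph) : R := \sum_(e in T) edge_w d e.

Definition connected (G : graph) : Prop := forall x y, connect (adj G) x y.

Definition acyclic (G : graph) : Prop :=
  ~ exists c : seq X, [/\ uniq c, (3 <= size c)%N & cycle (adj G) c].

Definition spanning_tree (T : graph) : Prop :=
  [/\ T \subset complete_graph, connected T & acyclic T].

Definition is_MST (d : X -> X -> R) (T : graph) : Prop :=
  spanning_tree T /\ (forall T', spanning_tree T' -> weight d T <= weight d T').

Definition clique (G : graph) (C : {set X}) : Prop :=
  forall x y, x \in C -> y \in C -> x != y -> [set x; y] \in G.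

Definition maximal_clique (G : graph) (C : {set X}) : Prop :=
  clique G C /\ (forall D, clique G D -> C \subset D -> D = C).

Definition facet_edge (G : graph) (e : {set X}) : Prop :=
  e \in G /\ maximal_clique G e.

Definition exposed (G : graph) (e : {set X}) : Prop :=
  [/\ e \in G,
      (exists C, [/\ maximal_clique G C, e \subset C &
                    forall C', maximal_clique G C' -> e \subset C' -> C' = C])
    & ~ facet_edge G e].

Definition d_erasure (d : X -> X -> R) (G H : graph) : Prop :=
  exists e, [/\ exposed G e,
               (forall e', exposed G e' -> edge_w d e' <= edge_w d e) &
               H = G :\ e].

End Defs.

(* Main.v *)
Require Import Defs.
From mathcomp Require Import all_boot all_order all_algebra.
From Stdlib Require Import Classical.
Import Order.TTheory GRing.Theory Num.Theory.
Set Implicit Arguments. Unset Strict Implicit. Unset Printing Implicit Defensive.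

Lemma ex_min_nat (T : finType) (P : T -> Prop) (f : T -> nat) :
  (exists t, P t) -> exists t, P t /\ forall t', P t' -> f t <= f t'.
Proof.
move=> [t Pt].
have H : forall n t0, f t0 <= n -> P t0 ->
    exists t1, P t1 /\ forall t', P t' -> f t1 <= f t'.
  elim=> [|n IH] t0 Hn Pt0.
    exists t0; split=> // t' _; by move: Hn; rewrite leqn0 => /eqP->.
  case: (classic (exists t', P t' /\ f t' < f t0)) => [[t' [Pt' lt]]|nex].
    apply: (IH t') => //; rewrite -ltnS; exact: leq_trans lt Hn.
  exists t0; split=> // t' Pt'; rewrite leqNgt; apply/negP => lt.
  by apply: nex; exists t'.
exact: (H (f t) t (leqnn _) Pt).
Qed.

Section Graphs.
Variable X : finType.
Implicit Types (G H T S : graph X) (C D L f K M : {set X}).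

Definition simpleg G := G \subset complete_graph X.

Lemma adjC G a b : adj G a b = adj G b a.
Proof. by rewrite /adj setUC. Qed.

Lemma adjD1 G g a b : adj (G :\ g) a b = ([set a; b] != g) && adj G a b.
Proof. by rewrite /adj in_setD1. Qed.

Lemma adj_sym G : symmetric (adj G).
Proof. move=> a b; exact: adjC. Qed.

Lemma connectC G a b : connect (adj G) a b = connect (adj G) b a.
Proof. exact: (sym_connect_sym (adj_sym G)). Qed.

Lemma adj_neq G a b : simpleg G -> adj G a b -> a != b.
Proof.
move=> sG hab; have := subsetP sG _ hab; rewrite inE cards2.
by case: (a != b).
Qed.

Lemma adj_complete a b : a != b -> adj (complete_graph X) a b.
Proof. by move=> nab; rewrite /adj inE cards2 nab. Qed.

Lemma ctrans (e : rel X) a b c : connect e a b -> connect e b c -> connect e a c.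
Proof. move=> h1 h2; exact: (connect_trans h1 h2). Qed.

Lemma connect_mono G H : G \subset H -> forall a b,
  connect (adj G) a b -> connect (adj H) a b.
Proof.
move=> sub a b; apply: connect_sub => p q hpq; apply: connect1.
exact: (subsetP sub).
Qed.

Lemma connect_ind (e : rel X) (P : X -> Prop) x : P x ->
  (forall a b, P a -> e a b -> P b) -> forall y, connect e x y -> P y.
Proof.
move=> Px step y /connectP [p pth ->].
elim: p x Px pth => [|z p IH] x Px //= /andP [exz pth].
apply: (IH z) => //; exact: step exz.
Qed.

Lemma path_avoid S (g : {set X}) a s z :
  path (adj S) a (rcons s z) -> all (fun p => p \notin g) (a :: s) ->
  path (adj (S :\ g)) a (rcons s z).
Proof.
elim: s a => [|b s IH] a /=.
  rewrite !andbT => hz ag; rewrite /adj in_setD1; rewrite /adj in hz; rewrite hz andbT.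
  by apply/negP => /eqP eg; move: ag; rewrite -eg !inE eqxx.
move=> /andP [hab pth] /andP [ag allg].
rewrite (IH b) // andbT /adj in_setD1; rewrite /adj in hab; rewrite hab andbT.
by apply/negP => /eqP eg; move: ag; rewrite -eg !inE eqxx.
Qed.

Lemma span_tree_sub H : simpleg H -> connected H ->
  exists T, T \subset H /\ spanning_tree T.
Proof.
move=> sH cH.
have [S [[SH cS] Smin]] := @ex_min_nat {set {set X}} (fun S => S \subset H /\ connected S)
  (fun S : graph X => #|S|) (ex_intro _ H (conj (subxx H) cH)).
have sS : simpleg S by exact: subset_trans SH sH.
exists S; split => //; split => //.
move=> [c [uc sc cyc]].
case: c uc sc cyc => [|c0 [|c1 [|r1 s]]] //= uc _.
move=> /and3P [h01 h1r pthc].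
set g := [set c0; c1].
have gS : g \in S by [].
move: uc; rewrite !inE !negb_or => /andP [/and3P [n01 n0r n0s] /andP [/andP [n1r n1s] _]].
have n10 : c1 != c0 by rewrite eq_sym.
have ng p : p \in r1 :: s -> p \notin g.
  rewrite inE => /orP [/eqP->|ps]; rewrite !inE negb_or.
    by rewrite eq_sym n0r eq_sym n1r.
  apply/andP; split; apply/negP => /eqP ep; subst p.
    by rewrite ps in n0s.
  by rewrite ps in n1s.
have c10 : connect (adj (S :\ g)) c1 c0.
  apply/connectP; exists (r1 :: rcons s c0); last by rewrite /= last_rcons.
  rewrite /= (@path_avoid S g r1 s c0) ?andbT //.
  - rewrite /adj in_setD1; rewrite /adj in h1r; rewrite h1r andbT; apply/negP => /eqP e1.
    have : r1 \in g by rewrite -e1 !inE eqxx orbT.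
    by move: (ng r1); rewrite inE eqxx => /(_ isT) /negP.
  - by apply/allP => p /ng.
have cS' : connected (S :\ g).
  move=> a b; apply: (connect_sub _ (cS a b)) => p q hpq.
  case: (eqVneq [set p; q] g) => [epq|npq]; last first.
    by apply: connect1; rewrite adjD1 npq hpq.
  have npq := adj_neq sS hpq.
  have : p \in g by rewrite -epq !inE eqxx.
  have : q \in g by rewrite -epq !inE eqxx orbT.
  rewrite !inE => /orP [] /eqP -> /orP [] /eqP ->; rewrite ?eqxx // in npq *.
    by rewrite connectC.
have := Smin (S :\ g) (conj (subset_trans (subD1set S g) SH) cS').
by rewrite (cardsD1 g S) gS ltnn.
Qed.

Lemma tree_cut T x y : spanning_tree T -> [set x; y] \in T -> x != y ->
  ~~ connect (adj (T :\ [set x; y])) x y.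
Proof.
move=> [sT _ acT] exy nxy; apply/negP => /connectP [p pth].
case: (shortenP pth) => p' pth' up' _ ely.
apply: acT; exists (x :: p'); split => //.
  case: p' pth' up' ely => [|z [|w q]] //=.
    by move=> _ _ eyx; rewrite eyx eqxx in nxy.
  rewrite andbT => hz _ ey; subst z.
  by move: hz; rewrite adjD1 eqxx.
rewrite /= rcons_path.
rewrite (sub_path _ pth') /=; last first.
  by move=> a b; rewrite adjD1 => /andP [].
by rewrite -ely adjC.
Qed.

Lemma exchange_connected T x y u v : connected T ->
  connect (adj (T :\ [set x; y])) x u ->
  ~~ connect (adj (T :\ [set x; y])) x v ->
  connected ([set u; v] |: (T :\ [set x; y])).
Proof.
set e := [set x; y]; set T' := T :\ e; set Hh := _ |: _.
move=> cT xu nxv.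
have side w : connect (adj T') x w \/ connect (adj T') y w.
  apply: (connect_ind (P := fun w => connect (adj T') x w \/ connect (adj T') y w)) (cT x w).
    by left; exact: connect0.
  move=> a b Pa hab; case: (eqVneq [set a; b] e) => [eab|nab].
    have : b \in e by rewrite -eab !inE eqxx orbT.
    by rewrite !inE => /orP [] /eqP ->; [left|right]; exact: connect0.
  have hab' : adj T' a b by rewrite adjD1 nab.
  by case: Pa => Pa; [left|right]; apply: (ctrans Pa); apply: connect1.
have sub : T' \subset Hh by exact: subsetUr.
have xy : connect (adj Hh) x y.
  have yv : connect (adj T') y v.
    by case: (side v) => // h; rewrite h in nxv.
  apply: ctrans ((@connect_mono T' Hh sub _ _ xu)) _.
  have huv : adj Hh u v by rewrite /adj setU11.
  apply: ctrans (connect1 huv) _.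
  by rewrite connectC; apply: (@connect_mono T' Hh sub _ _ yv).
have xw w : connect (adj Hh) x w.
  case: (side w) => h; first exact: (@connect_mono T' Hh sub _ _ h).
  exact: ctrans xy ((@connect_mono T' Hh sub _ _ h)).
by move=> a b; apply: ctrans (xw b); rewrite connectC.
Qed.


Lemma clique_sub G C D : clique G C -> D \subset C -> clique G D.
Proof. move=> cC sub p q pD qD; apply: cC; exact: (subsetP sub). Qed.

Lemma max_ext G C : clique G C -> exists M, maximal_clique G M /\ C \subset M.
Proof.
move=> cC.
have [M [[cM CM] Mmin]] := @ex_min_nat {set X} (fun M => clique G M /\ C \subset M)
  (fun M => #|~: M|) (ex_intro _ C (conj cC (subxx C))).
exists M; split => //; split => // D cD MD.
case: (eqVneq D M) => // nDM.
have pr : M \proper D by rewrite properEneq eq_sym nDM MD.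
have := Mmin D (conj cD (subset_trans CM MD)).
by rewrite leqNgt proper_card // properC.
Qed.

Definition later C (r : X -> nat) v a := (a \in C) || (r v <= r a).
Definition valid G C r := forall v a b, v \notin C -> a != b -> adj G v a ->
  adj G v b -> later C r v a -> later C r v b -> adj G a b.
Definition Inv G := forall C, clique G C -> exists r, valid G C r.
Definition NP G C r v := v |: [set a | adj G v a && later C r v a].

Lemma Inv_K : Inv (complete_graph X).
Proof. by move=> C _; exists (fun _ => 0) => v a b _ nab *; exact: adj_complete. Qed.

Lemma NP_clique G C r v : valid G C r -> v \notin C -> clique G (NP G C r v).
Proof.
move=> val vC p q; rewrite !inE.
move=> /orP [/eqP->|/andP [vp lp]] /orP [/eqP->|/andP [vq lq]] npq.
- by rewrite eqxx in npq.
- exact: vq.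
- by move: vp; rewrite /adj setUC.
- exact: (val v p q).
Qed.

Lemma in_NP G C r v a : adj G v a -> later C r v a -> a \in NP G C r v.
Proof. by move=> h l; rewrite !inE h l orbT. Qed.

Lemma valid_erase G (C0 : {set X}) C r x0 y0 : simpleg G -> clique G C0 -> x0 \in C0 -> y0 \in C0 ->
  x0 != y0 ->
  (forall K, clique G K -> x0 \in K -> y0 \in K -> K \subset C0) ->
  valid G C r -> x0 \notin C -> later C r x0 y0 ->
  exists r', valid (G :\ [set x0; y0]) C r'.
Proof.
move=> sG cC0 x0C0 y0C0 nxy K1 val x0C lxy.
set e := [set x0; y0].
have x0e : x0 \in e by rewrite !inE eqxx.
have y0e : y0 \in e by rewrite !inE eqxx orbT.
have NPC v : v \notin C -> x0 \in NP G C r v -> y0 \in NP G C r v -> NP G C r v \subset C0.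
  by move=> vC h1 h2; apply: K1 => //; exact: NP_clique.
set W := [set w | [&& w \in C0, w \notin C, w != x0, w != y0 & r w <= r x0]].
pose r' w := if w \in W then (r x0).*2.+1 else (r w).*2.
exists r'.
have x0W : x0 \notin W by rewrite inE eqxx /= !andbF.
have WC0 w : w \in W -> w \in C0 by rewrite inE => /and5P [].
have WN w : w \in W -> NP G C r w \subset C0.
  rewrite inE => /and5P [wC0 wC wx wy wr]; apply: NPC => //.
    by apply: in_NP; [exact: cC0 | by rewrite /later wr orbT].
  apply: in_NP; first exact: cC0.
  by move: lxy; rewrite /later => /orP [->//|h]; rewrite (leq_trans wr h) orbT.
have x0N : NP G C r x0 \subset C0.
  apply: NPC => //; first exact: setU11.
  by apply: in_NP => //; exact: cC0.
have fin a b z : a \in C0 -> b \in C0 -> a != b -> z \in e -> z != a -> z != b ->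
    adj (G :\ e) a b.
  move=> aC bC nab ze za zb; have hab : adj G a b := cC0 a b aC bC nab.
  rewrite adjD1 hab andbT.
  apply/negP => /eqP eab; move: ze; rewrite -eab !inE.
  by rewrite (negbTE za) (negbTE zb).
move=> v a b vC nab hva hvb lva lvb.
have hva' : adj G v a by move: hva; rewrite adjD1 => /andP [].
have hvb' : adj G v b by move: hvb; rewrite adjD1 => /andP [].
case: (boolP (v \in W)) => vW.
  have H1 c : adj G v c -> later C r' v c -> c \in C0 /\ c != x0.
    move=> hvc; rewrite /later /r' vW.
    case: (boolP (c \in W)) => cW lvc.
      split; first exact: WC0.
      by apply/eqP => ecx; move: x0W; rewrite -ecx cW.
    have lc : later C r v c.
      rewrite /later; move: lvc => /orP [->//|h]; apply/orP; right.
      move: vW; rewrite inE => /and5P [_ _ _ _ vr].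
      rewrite ltn_double in h; exact: (leq_trans vr (ltnW h)).
    split; first by apply: (subsetP (WN v vW)); exact: in_NP.
    apply/eqP => ecx; move: lvc; rewrite ecx (negbTE x0C) /=.
    by rewrite ltnn.
  have [aC0 ax] := H1 a hva' lva; have [bC0 bx] := H1 b hvb' lvb.
  by apply: (fin a b x0) => //; rewrite eq_sym.
case: (eqVneq v x0) => [vx|vx].
  subst v.
  have H2 c : adj (G :\ e) x0 c -> later C r' x0 c -> c \in C0 /\ c != y0.
    move=> hvc lvc; split; last first.
      apply/eqP => ecy; move: hvc; by rewrite ecy adjD1 eqxx.
    case: (boolP (c \in W)) => cW; first exact: WC0.
    apply: (subsetP x0N); apply: in_NP.
      by move: hvc; rewrite adjD1 => /andP [].
    move: lvc; rewrite /later /r' (negbTE cW) (negbTE x0W) leq_double.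
    done.
  have [aC0 ay] := H2 a hva lva; have [bC0 by0] := H2 b hvb lvb.
  by apply: (fin a b y0) => //; rewrite eq_sym.
case: (boolP ((v == y0) && (r y0 <= r x0))) => [/andP [/eqP vy ryx]|nvy].
  subst v.
  have yN : NP G C r y0 \subset C0.
    apply: NPC => //; last exact: setU11.
    apply: in_NP; first by apply: cC0; rewrite // eq_sym.
    by rewrite /later ryx orbT.
  have H3 c : adj (G :\ e) y0 c -> later C r' y0 c -> c \in C0 /\ c != x0.
    move=> hvc lvc; split; last first.
      apply/eqP => ecx; move: hvc; rewrite ecx adjD1.
      by rewrite /e setUC eqxx.
    case: (boolP (c \in W)) => cW; first exact: WC0.
    apply: (subsetP yN); apply: in_NP.
      by move: hvc; rewrite adjD1 => /andP [].
    move: lvc; rewrite /later /r' (negbTE cW) (negbTE vW) leq_double.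
    done.
  have [aC0 ax] := H3 a hva lva; have [bC0 bx] := H3 b hvb lvb.
  by apply: (fin a b x0) => //; rewrite eq_sym.
have H4 c : adj G v c -> later C r' v c -> later C r v c.
  move=> hvc; rewrite /later /r' (negbTE vW).
  case: (boolP (c \in W)) => cW; last first.
    by move=> /orP [->//|h]; rewrite -leq_double h orbT.
  move=> /orP [->//|h].
  have rvx : r v <= r x0.
    rewrite leqNgt; apply/negP => lt; move: h; rewrite leqNgt; apply/negP/negPn.
    by rewrite -leq_double doubleS in lt.
  apply/orP; right; rewrite leqNgt; apply/negP => rcv.
  have vC0 : v \in C0.
    apply: (subsetP (WN c cW)); apply: in_NP; first by rewrite adjC.
    by rewrite /later ltnW // orbT.
  have vy : v != y0.
    apply/eqP => vy; move: nvy; by rewrite vy eqxx -vy rvx.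
  have : v \in W by rewrite inE vC0 vC vx vy rvx.
  by rewrite (negbTE vW).
have hab := val v a b vC nab hva' hvb' (H4 a hva' lva) (H4 b hvb' lvb).
rewrite adjD1 hab andbT; apply/negP => /eqP eab.
have inab z : z \in e -> adj G v z /\ later C r v z.
  rewrite -eab !inE => /orP [] /eqP ->.
    by split; [exact: hva' | exact: H4].
  by split; [exact: hvb' | exact: H4].
have [vx0 lx0] := inab x0 x0e; have [vy0 ly0] := inab y0 y0e.
have vC0 : v \in C0.
  apply: (subsetP (NPC v vC (in_NP vx0 lx0) (in_NP vy0 ly0))); exact: setU11.
have vy : v != y0 := adj_neq sG vy0.
have : v \in W.
  rewrite inE vC0 vC vx vy /=; move: lx0; by rewrite /later (negbTE x0C).
by rewrite (negbTE vW).
Qed.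


Lemma exposed_C0 G f : exposed G f -> exists C0, [/\ maximal_clique G C0, f \subset C0,
  (forall C', maximal_clique G C' -> f \subset C' -> C' = C0) & C0 != f].
Proof.
case=> fG [C0 [mC0 fC0 uC0]] nf; exists C0; split => //.
by apply/eqP => eC0; apply: nf; split => //; rewrite -eC0.
Qed.

Lemma in_C0 G f (C0 : {set X}) : (forall C', maximal_clique G C' -> f \subset C' -> C' = C0) ->
  forall K, clique G K -> f \subset K -> K \subset C0.
Proof.
move=> uC0 K cK fK; have [M [mM KM]] := max_ext cK.
by rewrite -(uC0 M mM (subset_trans fK KM)).
Qed.

Lemma sub2 (a b : X) (K : {set X}) : a \in K -> b \in K -> [set a; b] \subset K.
Proof. by move=> aK bK; apply/subsetP => z; rewrite !inE => /orP [] /eqP ->. Qed.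

Lemma Inv_erase G x y : simpleg G -> Inv G -> exposed G [set x; y] -> x != y ->
  Inv (G :\ [set x; y]).
Proof.
move=> sG inv ex nxy C cC.
have cCG : clique G C.
  by move=> p q pC qC npq; have := cC p q pC qC npq; rewrite in_setD1 => /andP [].
have [r val] := inv C cCG.
have [C0 [mC0 eC0 uC0 _]] := exposed_C0 ex.
have cC0 : clique G C0 by case: mC0.
have xC0 : x \in C0 by apply: (subsetP eC0); rewrite !inE eqxx.
have yC0 : y \in C0 by apply: (subsetP eC0); rewrite !inE eqxx orbT.
have K1 K : clique G K -> x \in K -> y \in K -> K \subset C0.
  by move=> cK xK yK; apply: (in_C0 uC0 cK); exact: sub2.
have notboth : ~~ ((x \in C) && (y \in C)).
  apply/negP => /andP [xC yC]; have := cC x y xC yC nxy.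
  by rewrite in_setD1 eqxx.
case: (boolP (later C r x y && (x \notin C))) => [/andP [lxy xC]|h].
  exact: (valid_erase sG cC0 xC0 yC0 nxy K1 val xC lxy).
have -> : [set x; y] = [set y; x] by rewrite setUC.
have [yC lyx] : y \notin C /\ later C r y x.
  case: (boolP (x \in C)) => xC.
    by split; [by rewrite xC in notboth | by rewrite /later xC].
  move: h; rewrite xC andbT /later negb_or => /andP [yC ryx].
  by split => //; rewrite ltnW ?orbT // ltnNge.
apply: (valid_erase sG cC0 yC0 xC0 _ _ val yC lyx); first by rewrite eq_sym.
by move=> K cK yK xK; exact: K1.
Qed.

Lemma not_max_sub G f L : clique G L -> f \subset L -> f != L -> ~ maximal_clique G f.
Proof. by move=> cL fL nfL [_ mf]; move/eqP: nfL; apply; rewrite (mf L cL fL). Qed.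

Lemma crossing_exposed G (A : {set X}) x y : simpleg G -> Inv G ->
  exposed G [set x; y] -> x \in A -> y \notin A ->
  exists f, [/\ exposed G f, f != [set x; y] &
     exists u v, f = [set u; v] /\ u \in A /\ v \notin A].
Proof.
move=> sG inv ex xA yA.
have nxy : x != y by apply: contraNneq yA => <-.
have [C0 [mC0 eC0 uC0 nC0]] := exposed_C0 ex.
have cC0 : clique G C0 by case: mC0.
have [r val] := inv C0 cC0.
have orient p q : p \in A -> q \notin A -> exists u v, [set p; q] = [set u; v] /\ u \in A /\ v \notin A.
  by move=> pA qA; exists p, q.
have orient' p q : p \notin A -> q \in A -> exists u v, [set p; q] = [set u; v] /\ u \in A /\ v \notin A.
  by move=> pA qA; exists q, p; rewrite setUC.
pose P (Lm : {set X} * X) := [/\ maximal_clique G Lm.1, 2 < #|Lm.1|,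
   (exists p q, [/\ p \in Lm.1, q \in Lm.1, p \in A & q \notin A]),
   Lm.2 \in Lm.1 & Lm.2 \notin C0].
case: (classic (exists Lm, P Lm)) => [exL|noL].
  have [[L m] [[mL cardL [p [q [pL qL pA qA]]] mL' mnC0] Lmin]] :=
    @ex_min_nat ({set X} * X)%type P (fun Lm => r Lm.2) exL.
  rewrite /= in mL' mnC0 Lmin.
  have cL : clique G L by case: mL.
  pose t := if m \in A then q else p.
  have tL : t \in L by rewrite /t; case: (m \in A).
  have mtA : (m \in A) != (t \in A).
    by rewrite /t; case: (boolP (m \in A)) => mA; rewrite ?pA ?qA.
  have nmt : m != t by apply: contraNneq mtA => <-; rewrite eqxx.
  set f := [set m; t].
  have fL : f \subset L by exact: sub2.
  have cardf : #|f| = 2 by rewrite cards2 nmt.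
  have nfL : f != L by apply/eqP => efL; move: cardL; rewrite -efL cardf.
  have NPc := NP_clique val mnC0.
  have LN : L \subset NP G C0 r m.
    apply/subsetP => s sL; case: (eqVneq s m) => [->|nsm]; first exact: setU11.
    apply: in_NP; first by apply: cL; rewrite // eq_sym.
    rewrite /later; case: (boolP (s \in C0)) => //= sC0.
    by apply: (Lmin (L, s)); split => //; exists p, q.
  exists f; split.
  - split; first by apply: cL.
      exists L; split => // K mK fK.
      case: (eqVneq K L) => // nKL; exfalso.
      have cK : clique G K by case: mK.
      have mK' : m \in K by apply: (subsetP fK); rewrite !inE eqxx.
      have tK : t \in K by apply: (subsetP fK); rewrite !inE eqxx orbT.
      have psub : f \proper K.
        rewrite properEneq fK andbT; apply/eqP => efK.
        by move/eqP: nKL; apply; apply: esym; apply: (proj2 mK L cL); rewrite -efK.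
      have cardK : 2 < #|K| by rewrite -cardf proper_card.
      case: (boolP (K \subset NP G C0 r m)) => [KN|/subsetPn [s sK sN]].
        have cKL : clique G (K :|: L).
          by apply: (clique_sub NPc); rewrite subUset KN LN.
        have eKL : K :|: L = L by apply: (proj2 mL) => //; exact: subsetUr.
        have KL : K \subset L by rewrite -eKL subsetUl.
        by move/eqP: nKL; apply; apply: esym; apply: (proj2 mK L cL KL).
      have nsm : s != m by apply: contraNneq sN => ->; exact: setU11.
      have hms : adj G m s by apply: cK; rewrite // eq_sym.
      move: sN; rewrite !inE negb_or nsm hms /= /later negb_or -ltnNge.
      move=> /andP [sC0 lt].
      have := Lmin (K, s); rewrite /= leqNgt lt => /(_ _) /negP; apply; split => //.
      case: (boolP (m \in A)) mtA => mA /=; rewrite ?negbK => tA.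
        by exists m, t.
      by exists t, m.
    by move=> [_]; apply: (not_max_sub cL fL nfL).
  - apply/eqP => ef; have : m \in [set x; y] by rewrite -ef !inE eqxx.
    by move/(subsetP eC0); rewrite (negbTE mnC0).
  - case: (boolP (m \in A)) mtA => mA; rewrite /= ?negbK => tA.
      exact: orient.
    exact: orient'.
have gen p q : p \in C0 -> q \in C0 -> p \in A -> q \notin A ->
    [set p; q] != C0 -> exposed G [set p; q].
  move=> pC qC pA qA nC.
  have npq : p != q by apply: contraNneq qA => <-.
  have fC : [set p; q] \subset C0 by exact: sub2.
  split; first exact: cC0.
    exists C0; split => // K mK fK.
    case: (eqVneq K C0) => // nKC; exfalso.
    have cK : clique G K by case: mK.
    case: (boolP (K \subset C0)) => [KC|/subsetPn [s sK sC]].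
      by move/eqP: nKC; apply; apply: esym; apply: (proj2 mK C0 cC0 KC).
    apply: noL; exists (K, s); split => //=; last by exists p, q; split => //; apply: (subsetP fK); rewrite !inE eqxx ?orbT.
    have psub : [set p; q] \proper K.
      rewrite properEneq fK andbT; apply/eqP => efK.
      have : s \in C0 by apply: (subsetP fC); rewrite efK.
      by rewrite (negbTE sC).
    by rewrite -(_ : #|[set p; q]| = 2) ?proper_card // cards2 npq.
  by move=> [_]; apply: (not_max_sub cC0 fC nC).
have [z zC0 ze] : exists2 z, z \in C0 & z \notin [set x; y].
  apply/subsetPn; apply: contra nC0 => C0e; by rewrite eqEsubset C0e eC0.
have xC0 : x \in C0 by apply: (subsetP eC0); rewrite !inE eqxx.
have yC0 : y \in C0 by apply: (subsetP eC0); rewrite !inE eqxx orbT.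
move: ze; rewrite !inE negb_or => /andP [zx zy].
case: (boolP (z \in A)) => zA.
  exists [set z; y]; split.
  - apply: gen => //; apply/eqP => eC; move: xC0; rewrite -eC !inE.
    by rewrite eq_sym (negbTE zx) (negbTE nxy).
  - apply/eqP => e1; have : z \in [set x; y] by rewrite -e1 !inE eqxx.
    by rewrite !inE (negbTE zx) (negbTE zy).
  - by exists z, y.
exists [set x; z]; split.
- apply: gen => //; apply/eqP => eC; move: yC0; rewrite -eC !inE.
  by rewrite eq_sym (negbTE nxy) eq_sym (negbTE zy).
- apply/eqP => e1; have : z \in [set x; y] by rewrite -e1 !inE eqxx orbT.
  by rewrite !inE (negbTE zx) (negbTE zy).
- by exists x, z.
Qed.

End Graphs.

Local Open Scope ring_scope.

Section Main.
Variables (R : realFieldType) (X : finType) (d : X -> X -> R).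

Lemma ex_min_R (T : finType) (P : T -> Prop) (f : T -> R) :
  (exists t, P t) -> exists t, P t /\ forall t', P t' -> f t <= f t'.
Proof.
move=> ex; have [t [Pt H]] := @ex_min_nat T P (fun t => #|[set s | f s < f t]|) ex.
exists t; split=> // t' Pt'; rewrite leNgt; apply/negP => lt.
have := H t' Pt'; apply/negP; rewrite -ltnNge.
apply: proper_card; apply/properP; split.
  by apply/subsetP => s; rewrite !inE => /lt_trans; apply.
by exists t'; rewrite !inE ?ltxx.
Qed.

Lemma edge_w_ge0 : metric d -> forall e, 0 <= edge_w d e.
Proof.
case=> d0 _ _ _ e; rewrite /edge_w.
by case: pickP => [a _|_] //; case: pickP => [b _|_] //.
Qed.

Lemma weight_sub (md : metric d) (S H : graph X) : S \subset H -> weight d S <= weight d H.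
Proof.
move=> sub; rewrite /weight [X in _ <= X](big_setID S) /=.
have -> : H :&: S = S by apply/setIidPr.
rewrite lerDl; apply: sumr_ge0 => e _; exact: edge_w_ge0.
Qed.

Lemma complete_connected : connected (complete_graph X).
Proof.
move=> a b; case: (eqVneq a b) => [->|nab]; first exact: connect0.
by apply: connect1; exact: adj_complete.
Qed.

Lemma MST_exists : exists T, is_MST d T.
Proof.
have [T0 [_ st]] := span_tree_sub (subxx _) complete_connected.
have [T [sT Tmin]] := @ex_min_R _ (@spanning_tree X) (weight d) (ex_intro _ T0 st).
by exists T; split.
Qed.

End Main.

Unset Implicit Arguments.

Theorem theorem3p2 (R : realFieldType) (X : finType) (d : X -> X -> R)
  (m : nat) (G : nat -> graph X) :
  metric d ->
  G 0%N = complete_graph X ->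
  (forall i, (i < m)%N -> d_erasure d (G i) (G i.+1)) ->
  exists T : graph X, is_MST d T /\ T \subset G m.
Proof.
move=> md G0 Hstep.
have main : forall i, (i <= m)%N ->
    [/\ simpleg (G i), Inv (G i) & exists T, is_MST d T /\ T \subset G i].
  elim=> [|i IH] lim.
    rewrite G0; split; [exact: subxx | exact: Inv_K |].
    have [T mT] := MST_exists d; exists T; split => //.
    by case: mT => [[sT _ _] _].
  have [sG inv [T [[stT Tmin] TG]]] := IH (ltnW lim).
  have [e [expe maxe ->]] := Hstep i lim.
  have eG : e \in G i by case: expe.
  have /cards2P [x [y [nxy exy]]] : #|e| == 2%N.
    by have := subsetP sG e eG; rewrite inE.
  subst e.
  split.
  - exact: subset_trans (subD1set _ _) sG.
  - exact: Inv_erase.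
  case: (boolP ([set x; y] \in T)) => eT; last first.
    exists T; split => //; apply/subsetP => f fT.
    rewrite in_setD1 (subsetP TG f fT) andbT.
    by apply: contraNneq eT => <-.
  set A := [set w | connect (adj (T :\ [set x; y])) x w].
  have xA : x \in A by rewrite inE connect0.
  have yA : y \notin A by rewrite inE; exact: tree_cut.
  have [f [expf nfe [u [v [fuv [uA vA]]]]]] := crossing_exposed sG inv expe xA yA.
  have fG : f \in G i by case: expf.
  set Hh := f |: (T :\ [set x; y]).
  have cH : connected Hh.
    rewrite /Hh fuv; apply: exchange_connected.
    - by case: stT.
    - by rewrite inE in uA.
    - by rewrite inE in vA.
  have sH : simpleg Hh.
    rewrite /simpleg subUset sub1set (subsetP sG f fG) /=.
    by case: stT => sT _ _; exact: subset_trans (subD1set _ _) sT.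
  have [T2 [T2H stT2]] := span_tree_sub sH cH.
  have fT : f \notin T :\ [set x; y].
    apply/negP => fT; move: vA; rewrite inE; apply/negP/negPn.
    apply: (ctrans (b := u)); first by rewrite inE in uA.
    by apply: connect1; rewrite /adj -fuv.
  exists T2; split; last first.
    apply: subset_trans T2H _; rewrite /Hh subUset sub1set in_setD1 fG nfe /=.
    exact: setSD.
  split => // T' stT'.
  apply: le_trans (weight_sub md T2H) _.
  apply: le_trans (Tmin T' stT').
  rewrite /weight /Hh big_setU1 //= [X in _ <= X](big_setD1 [set x; y]) //=.
  by rewrite lerD2r; apply: maxe.
by have [_ _] := main m (leqnn m).
Qed.
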